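(* For every integer $k\ge1$, $N(2k+4,k)=2$ if $3\mid k$ and $N(2k+4,k)=0$ if $3\nmid k$.
   Context: For $n>k\ge1$, $N(n,k)$ is the nullity of the $n\times n$ skew-symmetric Toeplitz matrix $A(n,k)$ whose first $k$ superdiagonals have all entries $1$ and whose remaining superdiagonals have all entries $0$. *)

(* Defs.v *)
From mathcomp Require Import all_boot all_order all_algebra.
Set Implicit Arguments. Unset Strict Implicit. Unset Printing Implicit Defensive.
Import GRing.Theory Num.Theory.
Local Open Scope ring_scope.

Definition Amat (R : nzRingType) (n k : nat) : 'M[R]_n :=
  \matrix_(i < n, j < n)
    (if (i < j)%N && (j <= i + k)%N then 1
     else if (j < i)%N && (i <= j + k)%N then -1 else 0).

Definition Nnull (R : fieldType) (n k : nat) : nat := (n - \rank (Amat R n k))%N.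

(* Main.v *)
Require Import Defs.
From mathcomp Require Import all_boot all_order all_algebra.
From mathcomp Require Import zify ring lra.
Set Implicit Arguments. Unset Strict Implicit. Unset Printing Implicit Defensive.
Import GRing.Theory Num.Theory.
Local Open Scope ring_scope.

Lemma core (R : realFieldType) (k : nat) (P : nat -> R) :
  (1 <= k)%N -> P 0%N = 0 ->
  (forall m, (2*k+4 <= m)%N -> P m = P (2*k+4)%N) ->
  (forall j a b c d, (j < 2*k+4)%N -> a = j -> b = j.+1 -> c = (j - k)%N ->
       d = (j+k+1)%N -> P a + P b = P c + P d) ->
  (~~ (3 %| k)%N \/ (P 2%N = P 1%N /\ P 3%N = P 2%N)) ->
  forall m, P m = 0.
Proof.
move=> k1 H0 Hc HE Hcase.
have [k2|k3] := leqP k 2.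
  have Hk : k = 1%N \/ k = 2%N by lia.
  case: Hk => Hk; subst k.
  - have e0 := HE 0%N 0%N 1%N 0%N 2%N isT erefl erefl erefl erefl.
    have e1 := HE 1%N 1%N 2%N 0%N 3%N isT erefl erefl erefl erefl.
    have e2 := HE 2%N 2%N 3%N 1%N 4%N isT erefl erefl erefl erefl.
    have e3 := HE 3%N 3%N 4%N 2%N 5%N isT erefl erefl erefl erefl.
    have e4 := HE 4%N 4%N 5%N 3%N 6%N isT erefl erefl erefl erefl.
    have e5 := HE 5%N 5%N 6%N 4%N 7%N isT erefl erefl erefl erefl.
    have c7 := Hc 7%N isT.
    move=> m; have [hm|hm] := leqP 6 m.
      rewrite Hc //=. lra.
    have : (m = 0 \/ m = 1 \/ m = 2 \/ m = 3 \/ m = 4 \/ m = 5)%N by lia.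
    rewrite /=; case=> [->|[->|[->|[->|[->|->]]]]]; lra.
  - have e0 := HE 0%N 0%N 1%N 0%N 3%N isT erefl erefl erefl erefl.
    have e1 := HE 1%N 1%N 2%N 0%N 4%N isT erefl erefl erefl erefl.
    have e2 := HE 2%N 2%N 3%N 0%N 5%N isT erefl erefl erefl erefl.
    have e3 := HE 3%N 3%N 4%N 1%N 6%N isT erefl erefl erefl erefl.
    have e4 := HE 4%N 4%N 5%N 2%N 7%N isT erefl erefl erefl erefl.
    have e5 := HE 5%N 5%N 6%N 3%N 8%N isT erefl erefl erefl erefl.
    have e6 := HE 6%N 6%N 7%N 4%N 9%N isT erefl erefl erefl erefl.
    have e7 := HE 7%N 7%N 8%N 5%N 10%N isT erefl erefl erefl erefl.
    have c9 := Hc 9%N isT. have c10 := Hc 10%N isT.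
    move=> m; have [hm|hm] := leqP 8 m.
      rewrite Hc //=. lra.
    have : (m = 0 \/ m = 1 \/ m = 2 \/ m = 3 \/ m = 4 \/ m = 5 \/ m = 6 \/ m = 7)%N by lia.
    rewrite /=; case=> [->|[->|[->|[->|[->|[->|[->|->]]]]]]]; lra.
set T := P (2*k+4)%N.
have A : forall j a b c, (1 <= j <= k)%N -> a = (k+1+j)%N -> b = j -> c = j.+1 ->
    P a = P b + P c.
  move=> j a b c hj ha hb hc.
  have := HE j b c 0%N a ltac:(lia) hb hc ltac:(lia) ltac:(lia).
  rewrite H0; lra.
have E0 : P (k+1)%N = P 1%N.
  have := HE 0%N 0%N 1%N 0%N (k+1)%N ltac:(lia) erefl erefl erefl ltac:(lia). lra.
have Ak1 := A 1%N (k+2)%N 1%N 2%N ltac:(lia) ltac:(lia) erefl erefl.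
have Ak2 := A 2%N (k+3)%N 2%N 3%N ltac:(lia) ltac:(lia) erefl erefl.
have E1 : P (2*k+2)%N = P 1%N + P 2%N.
  have := HE (k+1)%N (k+1)%N (k+2)%N 1%N (2*k+2)%N ltac:(lia) erefl ltac:(lia) ltac:(lia) ltac:(lia). lra.
have E2 : P (2*k+3)%N = P 1%N + P 2%N + P 3%N.
  have := HE (k+2)%N (k+2)%N (k+3)%N 2%N (2*k+3)%N ltac:(lia) erefl ltac:(lia) ltac:(lia) ltac:(lia). lra.
have P1 : P 1%N = 0.
  have := HE (2*k+3)%N (2*k+3)%N (2*k+4)%N (k+3)%N (3*k+4)%N ltac:(lia) erefl ltac:(lia) ltac:(lia) ltac:(lia).
  rewrite (Hc (3*k+4)%N) ?(_ : (3*k+4 = 3*k+4)%N) //; last lia. rewrite -/T. lra.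
have Tk1 : P k + P 2%N = T.
  have := HE (2*k+1)%N (2*k+1)%N (2*k+2)%N (k+1)%N (3*k+2)%N ltac:(lia) erefl ltac:(lia) ltac:(lia) ltac:(lia).
  rewrite (Hc (3*k+2)%N); last lia.
  have := A k (2*k+1)%N k (k+1)%N ltac:(lia) ltac:(lia) erefl ltac:(lia). rewrite -/T. lra.
have T2 : P 2%N + P 3%N = T.
  have := HE (2*k+2)%N (2*k+2)%N (2*k+3)%N (k+2)%N (3*k+3)%N ltac:(lia) erefl ltac:(lia) ltac:(lia) ltac:(lia).
  rewrite (Hc (3*k+3)%N); last lia. rewrite -/T. lra.
have Tm : forall m a b c, (2 <= m <= k)%N -> a = m.-1 -> b = m -> c = m.+1 ->
    P a + P b + P c = T.
  move=> m a b c hm ha hb hc.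
  have [m2|m3] := leqP m 2.
    have -> : a = 1%N by lia. have -> : b = 2%N by lia. have -> : c = 3%N by lia. lra.
  have := HE (k+m)%N (k+m)%N (k+m+1)%N m (2*k+m+1)%N ltac:(lia) erefl ltac:(lia) ltac:(lia) ltac:(lia).
  rewrite (Hc (2*k+m+1)%N); last lia.
  have := A a (k+m)%N a b ltac:(lia) ltac:(lia) erefl ltac:(lia).
  have := A b (k+m+1)%N b c ltac:(lia) ltac:(lia) erefl ltac:(lia).
  rewrite -/T hb. lra.
have per : forall m, (1 <= m)%N -> (m + 2 <= k)%N -> P (m+3)%N = P m.
  move=> m h1 h2.
  have := Tm (m+1)%N m (m+1)%N (m+2)%N ltac:(lia) ltac:(lia) erefl ltac:(lia).
  have := Tm (m+2)%N (m+1)%N (m+2)%N (m+3)%N ltac:(lia) ltac:(lia) erefl ltac:(lia).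
  lra.
have Pk : P k = P 3%N by lra.
have red : forall q r, (1 <= r <= 3)%N -> (3*q + r <= k+1)%N -> P (3*q + r)%N = P r.
  move=> q r hr; elim: q => [|q IH] hq; first by rewrite muln0 add0n.
  have -> : (3 * q.+1 + r = (3*q + r) + 3)%N by lia.
  rewrite per; [|lia|lia]. apply: IH; lia.
have decomp : forall m, (1 <= m)%N -> exists q r, (1 <= r <= 3)%N /\ m = (3*q + r)%N.
  move=> m hm; exists ((m-1) %/ 3)%N, ((m-1) %% 3 + 1)%N.
  have := divn_eq (m-1) 3. have := ltn_pmod (m-1) (isT : (0 < 3)%N).
  move: ((m-1) %/ 3)%N ((m-1) %% 3)%N => q s h1 h2. split; lia.
have P23 : P 2%N = 0 /\ P 3%N = 0.
  case: Hcase => [nd|[h2 h3]]; last by split; lra.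
  have : (k %% 3 = 1 \/ k %% 3 = 2)%N.
    move: nd; rewrite /dvdn; lia.
  have := divn_eq k 3.
  move: (k %/ 3)%N (k %% 3)%N => q s hks.
  case=> hs.
  - have := red q 2%N isT ltac:(lia). rewrite (_ : (3 * q + 2 = k + 1)%N); last lia.
    have := red q 1%N isT ltac:(lia). rewrite (_ : (3 * q + 1 = k)%N); last lia.
    rewrite E0. split; lra.
  - have := red q 3%N isT ltac:(lia). rewrite (_ : (3 * q + 3 = k + 1)%N); last lia.
    have := red q 2%N isT ltac:(lia). rewrite (_ : (3 * q + 2 = k)%N); last lia.
    rewrite E0. split; lra.
case: P23 => P2 P3.
have low : forall m, (1 <= m <= k+1)%N -> P m = 0.
  move=> m hm; have [q [r [hr e]]] := decomp m ltac:(lia).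
  rewrite e in hm *. rewrite red; [|done|lia].
  have : (r = 1 \/ r = 2 \/ r = 3)%N by lia.
  by case=> [->|[->|->]].
have T0 : T = 0 by lra.
move=> m.
have [hm|hm] := leqP (2*k+4) m; first by rewrite Hc.
have [hm3|hm3] := leqP (2*k+3) m.
  have -> : m = (2*k+3)%N by lia. rewrite E2 P2 P3 P1. lra.
have [hm2|hm2] := leqP (2*k+2) m.
  have -> : m = (2*k+2)%N by lia. rewrite E1 P2 P1. lra.
have [hk|hk] := leqP m (k+1).
  case: (posnP m) => [->//|mp]. by apply: low; lia.
rewrite (A (m - k - 1)%N m (m-k-1)%N (m-k)%N); [|lia|lia|lia|lia].
rewrite (low (m-k-1)%N); last lia.
rewrite (low (m-k)%N); last lia.
by rewrite addr0.
Qed.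


Fixpoint gg (R : fieldType) (a b : R) (m : nat) : R :=
  match m with 0 => b | 1 => 0 | 2 => a | m'.+3 => gg a b m' end.

Lemma ggk (R : fieldType) (a b : R) t m : gg a b (m + 3 * t) = gg a b m.
Proof.
elim: t => [|t IH]; first by rewrite muln0 addn0.
by rewrite (_ : (m + 3 * t.+1 = (m + 3 * t).+3)%N) //; lia.
Qed.

Lemma ggtrip (R : fieldType) (a b : R) m : gg a b m + gg a b m.+1 + gg a b m.+2 = a + b.
Proof.
elim/ltn_ind: m => [[|[|[|m]]] IH] /=.
- ring.
- ring.
- ring.
- by apply: IH; lia.
Qed.


Definition Q (R : fieldType) k (a b : R) m :=
  if m == 0%N then 0 else if (m <= k+1)%N then gg a b m
  else if (m <= 2*k+3)%N then gg a b (m-k-1) + gg a b (m-k) else a + b.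

Lemma Q0 (R : fieldType) k (a b : R) : Q k a b 0 = 0. Proof. by []. Qed.
Lemma Q_low (R : fieldType) k (a b : R) m : (1 <= m <= k+1)%N -> Q k a b m = gg a b m.
Proof. move=> h; rewrite /Q. have -> : (m == 0%N) = false by lia.
have -> : (m <= k+1)%N = true by lia. done. Qed.
Lemma Q_mid (R : fieldType) k (a b : R) m r : (k+2 <= m <= 2*k+3)%N -> (r + k + 1 = m)%N ->
  Q k a b m = gg a b r + gg a b r.+1.
Proof.
move=> h hr; rewrite /Q. have -> : (m == 0%N) = false by lia.
have -> : (m <= k+1)%N = false by lia.
have -> : (m <= 2*k+3)%N = true by lia.
have -> : (m - k - 1 = r)%N by lia.
by have -> : (m - k = r.+1)%N by lia.
Qed.
Lemma Q_hi (R : fieldType) k (a b : R) m : (2*k+4 <= m)%N -> Q k a b m = a + b.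
Proof. move=> h; rewrite /Q. have -> : (m == 0%N) = false by lia.
have -> : (m <= k+1)%N = false by lia.
by have -> : (m <= 2*k+3)%N = false by lia.
Qed.


Lemma Q_eqs (R : realFieldType) t (a b : R) j : (1 <= t)%N -> (j < 2*(3*t)+4)%N ->
  Q (3*t) a b j + Q (3*t) a b j.+1 = Q (3*t) a b (j - 3*t)%N + Q (3*t) a b (j + 3*t + 1)%N.
Proof.
set k := (3 * t)%N => t1 hj.
have gk : forall m, gg a b (m + k) = gg a b m by move=> m; exact: ggk.
have g1 : gg a b 1 = 0 by [].
have QL : forall m, (1 <= m <= k+1)%N -> Q k a b m = gg a b m by move=> m; exact: Q_low.
have QM : forall m r, (k+2 <= m <= 2*k+3)%N -> (r + k + 1 = m)%N ->
  Q k a b m = gg a b r + gg a b r.+1 by move=> m r; exact: Q_mid.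
have QH : forall m, (2*k+4 <= m)%N -> Q k a b m = a + b by move=> m; exact: Q_hi.
have gk1 : gg a b (k+1) = 0 by rewrite addnC gk.
have gk2 : gg a b (k+2) = gg a b 2 by rewrite addnC gk.
have gk3 : gg a b (k+3) = gg a b 3 by rewrite addnC gk.
have [j0|jp] := posnP j.
  rewrite j0 /= Q0 !add0r (QL 1%N) ?(QL (0 + k + 1)%N); [|lia|lia].
  by rewrite add0n gk1.
have [jk|jk] := leqP j k.
  rewrite (QL j) ?(QL j.+1); [|lia|lia].
  have -> : (j - k = 0)%N by lia.
  by rewrite Q0 add0r (QM (j+k+1)%N j); [|lia|lia].
case: (ltngtP j (k+1)) => jk1; first lia.
2: { rewrite jk1 (QL (k+1)%N); last lia.
     rewrite (QM (k+1).+1 1%N); [|lia|lia].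
     have -> : (k + 1 - k = 1)%N by lia.
     rewrite (QL 1%N); last lia.
     rewrite (QM (k+1+k+1)%N (k+1)%N); [|lia|lia].
     have -> : (k + 1).+1 = (k + 2)%N by lia.
     rewrite gk1 gk2 g1 /=; lra. }
case: (ltngtP j (k+2)) => jk2; first lia.
2: { rewrite jk2 (QM (k+2)%N 1%N); [|lia|lia].
     rewrite (QM (k+2).+1 2%N); [|lia|lia].
     have -> : (k + 2 - k = 2)%N by lia.
     rewrite (QL 2%N); last lia.
     rewrite (QM (k+2+k+1)%N (k+2)%N); [|lia|lia].
     have -> : (k + 2).+1 = (k + 3)%N by lia.
     rewrite gk3 gk2 g1 /=; lra. }
case: (ltngtP j (2*k+3)) => jk3; last first.
- rewrite jk3 (QM (2*k+3)%N (k+2)%N); [|lia|lia].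
  rewrite (QH (2*k+3).+1); last lia. rewrite (QH (2*k+3+k+1)%N); last lia.
  have -> : (2 * k + 3 - k = k + 3)%N by lia.
  rewrite (QM (k+3)%N 2%N); [|lia|lia].
  have -> : (k + 2).+1 = (k + 3)%N by lia.
  rewrite gk3 gk2; lra.
- lia.
- set r := (j - k - 1)%N.
  rewrite (QM j r); [|lia|lia].
  rewrite (QM j.+1 r.+1); [|lia|lia].
  rewrite (QH (j + k + 1)%N); last lia.
  have -> : Q k a b (j - k)%N = gg a b r.+1.
    have [h|h] := leqP (j - k) (k+1).
      rewrite QL; last lia. by congr gg; lia.
    rewrite (QM _ 1%N); [|lia|lia].
    have -> : r.+1 = (k + 2)%N by lia.
    rewrite gk2 g1 /=; lra.
  have := ggtrip a b r. lra.
Qed.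


Lemma Aentry (R : fieldType) n k (i j : 'I_n) :
  Amat R n k i j = (i < j)%N%:R - (i < j - k)%N%:R - (i < j + k + 1)%N%:R + (i < j + 1)%N%:R.
Proof.
rewrite mxE.
have [h1|h1] := ltnP i j; have [h2|h2] := ltnP i (j - k);
have [h3|h3] := ltnP i (j + k + 1); have [h4|h4] := ltnP i (j+1);
have [h5|h5] := leqP j (i + k); have [h6|h6] := ltnP j i; have [h7|h7] := leqP i (j+k);
rewrite /= ?subr0 ?sub0r ?addr0 ?add0r; try lia.
all: rewrite ?subrr ?addrN ?add0r ?addr0 ?subr0 //.
all: by rewrite addNr.
Qed.

Definition Px (R : fieldType) n (x : 'rV[R]_n) m := \sum_(i < n) x 0 i * (i < m)%N%:R.

Lemma col_eq (R : fieldType) n k (x : 'rV[R]_n) (j : 'I_n) :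
  (x *m Amat R n k) 0 j = (Px x j - Px x (j - k)) - (Px x (j + k + 1) - Px x (j + 1)).
Proof.
rewrite mxE /Px -!sumrB; apply: eq_bigr => i _; rewrite Aentry.
ring.
all: by rewrite addNr.
Qed.

Lemma Px0 (R : fieldType) n (x : 'rV[R]_n) : Px x 0 = 0.
Proof. by rewrite /Px big1 // => i _; rewrite mulr0. Qed.

Lemma Pxc (R : fieldType) n (x : 'rV[R]_n) m : (n <= m)%N -> Px x m = Px x n.
Proof.
move=> hm; rewrite /Px; apply: eq_bigr => i _.
by rewrite (leq_trans (ltn_ord i) hm) ltn_ord.
Qed.

Lemma xP (R : fieldType) n (x : 'rV[R]_n) (i : 'I_n) : x 0 i = Px x (i + 1) - Px x i.
Proof.
rewrite /Px -sumrB (bigD1 i) //= big1 ?addr0.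
  by rewrite addn1 ltnSn ltnn /= mulr1 mulr0 subr0.
move=> l /negbTE hl; rewrite -mulrBr.
have [h|h] := ltnP l i.
  by rewrite (_ : (l < i + 1)%N = true) ?subrr ?mulr0 //; lia.
have hn : (nat_of_ord l <> nat_of_ord i) by move=> e; move/eqP: hl; apply; exact: val_inj. rewrite (_ : (l < i + 1)%N = false) ?subrr ?mulr0 //; lia.
Qed.

Lemma kern0 (R : realFieldType) k (x : 'rV[R]_(2*k+4)) :
  (1 <= k)%N -> x *m Amat R (2*k+4) k = 0 ->
  (~~ (3 %| k)%N \/ (Px x 2 = Px x 1 /\ Px x 3 = Px x 2)) -> x = 0.
Proof.
move=> k1 hx hc.
have HE : forall j a b c d, (j < 2*k+4)%N -> a = j -> b = j.+1 -> c = (j - k)%N ->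
       d = (j+k+1)%N -> Px x a + Px x b = Px x c + Px x d.
  move=> j a b c d hj -> -> -> ->.
  have := col_eq k x (Ordinal hj). rewrite hx mxE /= !addn1. lra.
have HP := core k1 (Px0 x) (fun m hm => Pxc x hm) HE hc.
by apply/rowP => i; rewrite xP !HP mxE subrr.
Qed.

Definition vec (R : realFieldType) k (a b : R) : 'rV[R]_(2*k+4) :=
  \row_(i < 2*k+4) (Q k a b (i+1)%N - Q k a b i).

Lemma Px_vec (R : realFieldType) k (a b : R) m : Px (vec k a b) m = Q k a b m.
Proof.
elim: m => [|m IH]; first by rewrite Px0 Q0.
have [hm|hm] := ltnP m (2*k+4).
  have := xP (vec k a b) (Ordinal hm). rewrite mxE /= IH !addn1. lra.
rewrite Pxc; last lia. rewrite -(Pxc _ hm) IH Q_hi // Q_hi //; lia.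
Qed.

Lemma vec_ker (R : realFieldType) t (a b : R) : (1 <= t)%N ->
  vec (3*t) a b *m Amat R (2*(3*t)+4) (3*t) = 0.
Proof.
move=> t1; apply/rowP => j; rewrite col_eq !Px_vec mxE.
have := Q_eqs a b t1 (ltn_ord j). rewrite !addn1. lra.
Qed.

Definition Cmat (R : fieldType) n : 'M[R]_(n, 2) := \matrix_(i, j) ((i == j.+1 :> nat)%:R).

Lemma xC (R : fieldType) n (x : 'rV[R]_n) j : (x *m Cmat R n) 0 j = Px x j.+2 - Px x j.+1.
Proof.
rewrite mxE /Px -sumrB; apply: eq_bigr => i _; rewrite mxE -mulrBr; congr (_ * _).
have [h|h|h] := ltngtP i j.+1.
- by rewrite (_ : (i < j.+2)%N = true) ?subrr //; lia.
- by rewrite (_ : (i < j.+2)%N = false) ?subrr //; lia.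
- by rewrite (_ : (i < j.+2)%N = true) ?subr0 //; lia.
Qed.

Definition Bmat (R : realFieldType) k : 'M[R]_(2, 2*k+4) :=
  \matrix_(r < 2, i < 2*k+4) vec k ((r == 0 :> nat)%:R) 1 0 i.

Lemma rowB (R : realFieldType) k (r : 'I_2) : row r (Bmat R k) = vec k ((r == 0 :> nat)%:R) 1.
Proof. by apply/rowP => i; rewrite mxE /Bmat mxE. Qed.

Theorem theorem8p4 (R : realFieldType) (k : nat) : (1 <= k)%N ->
  Nnull R (2 * k + 4) k = (if (3 %| k)%N then 2%N else 0%N).
Proof.
move=> k1; rewrite /Nnull -mxrank_ker.
have kerrow : forall (y : 'rV_(2*k+4)), (y <= kermx (Amat R (2*k+4) k))%MS ->
    y *m Amat R (2*k+4) k = 0 by move=> y /sub_kermxP.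
case: ifP => h3; last first.
  apply/eqP; rewrite mxrank_eq0; apply/eqP/row_matrixP => i; rewrite row0.
  by apply: kern0 k1 (kerrow _ (row_sub i _)) _; left; rewrite h3.
apply/eqP; rewrite eqn_leq; apply/andP; split.
- rewrite -(mxrank_mul_ker _ (Cmat R (2*k+4))).
  have -> : \rank (kermx (Amat R (2*k+4) k) :&: kermx (Cmat R (2*k+4)))%MS = 0%N.
    apply/eqP; rewrite mxrank_eq0; apply/eqP/row_matrixP => i; rewrite row0.
    set y := row i _.
    have yK : (y <= kermx (Amat R (2*k+4) k))%MS := submx_trans (row_sub i _) (capmxSl _ _).
    have yC : (y <= kermx (Cmat R (2*k+4)))%MS := submx_trans (row_sub i _) (capmxSr _ _).
    move/sub_kermxP: yC => yC.
    apply: kern0 k1 (kerrow _ yK) _; right.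
    have := xC y 0; have := xC y 1; rewrite yC !mxE. split; lra.
  by rewrite addn0 rank_leq_col.
- case/dvdnP: h3 => t ht.
  have t1 : (1 <= t)%N by lia.
  rewrite mulnC in ht; subst k.
  have BK : (Bmat R (3*t) <= kermx (Amat R (2*(3*t)+4) (3*t)))%MS.
    apply/sub_kermxP; apply/row_matrixP => r; rewrite row_mul row0 rowB vec_ker //.
  apply: (leq_trans _ (mxrankS BK)).
  have BC : Bmat R (3*t) *m Cmat R _ = 1%:M.
    apply/matrixP => r j.
    have -> : (Bmat R (3*t) *m Cmat R (2*(3*t)+4)) r j = (row r (Bmat R (3*t) *m Cmat R (2*(3*t)+4))) 0 j by rewrite [RHS]mxE.
    case: r => [[|[|r]] hr] //; case: j => [[|[|j]] hj] //;
    rewrite row_mul rowB xC !Px_vec !Q_low; try lia; rewrite ?mxE /=.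
    all: try by rewrite ?subr0 ?subrr.
    all: try lia.
  apply: (leq_trans _ (mxrankM_maxl _ (Cmat R (2*(3*t)+4)))).
  by rewrite BC mxrank1.
Qed.
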